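(* Let $\psi:[0,1]\to[0,1]$ be convex and increasing with $\psi(0)=0$, and let $C\ge e^{1/e}$. Let $x=(x_1,\dots,x_n)$ be a stochastic vector and $y=\max_i x_i$. Then \[ \sum_{j=1}^n\psi\Big(\frac{x_j}{C\prod_{k=1}^n(1-x_k)^{1-x_k}}\Big)\ \le\ \frac1y\,\psi\Big(\frac{y\,e^{1-y}}{C\,(1-y)^{1-y}}\Big). \]
   Context: A stochastic vector has nonnegative entries summing to $1$. Convention: $0^0=1$. *)

(* Defs.v *)
From Stdlib Require Import Reals Lra List.
Open Scope R_scope.

(* Real power a^b with the convention 0^0 = 1 (and 0^b = 0 for b <> 0);
   for a > 0 it is Rpower a b = exp (b * ln a). *)
Definition rpow (a b : R) : R :=
  if Req_EM_T a 0 then (if Req_EM_T b 0 then 1 else 0) else Rpower a b.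

Definition sumL (l : list R) : R := fold_right Rplus 0 l.
Definition prodL (l : list R) : R := fold_right Rmult 1 l.
(* maximum of the entries (entries of a stochastic vector are >= 0, list nonempty) *)
Definition maxL (l : list R) : R := fold_right Rmax 0 l.

Definition stochastic (x : list R) : Prop :=
  Forall (fun t => 0 <= t) x /\ sumL x = 1.

(* Main.v *)
Require Import Defs.
From Stdlib Require Import Reals List Lra Psatz.
Open Scope R_scope.

Lemma exple a b : a <= b -> exp a <= exp b.
Proof. intros [H|H]. left; apply exp_increasing; auto. subst; lra. Qed.

Lemma rpow_ge1 t : 0 <= t <= 1 -> exp (- t) <= rpow (1 - t) (1 - t).
Proof.
  intros Ht. unfold rpow. destruct (Req_EM_T (1 - t) 0) as [e|e].
  - replace t with 1 by lra. apply Rle_trans with (exp 0); [apply exple; lra|rewrite exp_0; lra].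
  - unfold Rpower. apply exple.
    assert (Hu : 0 < 1 - t) by lra.
    set (w := ln (1 - t)).
    assert (Ew : exp w = 1 - t) by (apply exp_ln; auto).
    assert (H1 := exp_ineq1_le (- w)).
    assert (E2 : exp (- w) * exp w = 1) by (rewrite exp_Ropp; field; apply Rgt_not_eq, exp_pos).
    assert (P := exp_pos w).
    rewrite <- Ew. nra.
Qed.

Lemma rpow_ge2 u : 0 <= u <= 1 -> exp (- / exp 1) <= rpow u u.
Proof.
  intros Hu. unfold rpow. destruct (Req_EM_T u 0) as [e|e].
  - apply Rle_trans with (exp 0); [apply exple|rewrite exp_0; lra].
    assert (0 < / exp 1) by (apply Rinv_0_lt_compat, exp_pos). lra.
  - unfold Rpower. apply exple.
    assert (Hu' : 0 < u) by lra.
    set (w := ln u).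
    assert (Ew : exp w = u) by (apply exp_ln; auto).
    assert (H1 := exp_ineq1_le (- w - 1)).
    assert (E2 : exp (- w - 1) * exp w = / exp 1).
    { rewrite <- exp_plus, <- exp_Ropp. f_equal; ring. }
    assert (P := exp_pos w).
    rewrite <- Ew. nra.
Qed.

Lemma rpow_pos t : 0 <= t <= 1 -> 0 < rpow (1 - t) (1 - t).
Proof. intros H. eapply Rlt_le_trans; [apply exp_pos|apply rpow_ge1; auto]. Qed.

Lemma sumL_app l1 l2 : sumL (l1 ++ l2) = sumL l1 + sumL l2.
Proof. induction l1; simpl; [ring|]. unfold sumL in *; simpl; rewrite IHl1; ring. Qed.

Lemma prodL_app l1 l2 : prodL (l1 ++ l2) = prodL l1 * prodL l2.
Proof. induction l1; simpl; [ring|]. unfold prodL in *; simpl; rewrite IHl1; ring. Qed.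

Lemma prod_bound l : Forall (fun t => 0 <= t <= 1) l ->
  exp (- sumL l) <= prodL (map (fun xk => rpow (1 - xk) (1 - xk)) l).
Proof.
  induction 1; simpl.
  - unfold sumL; simpl. rewrite Ropp_0, exp_0. unfold prodL; simpl; lra.
  - unfold sumL, prodL in *; simpl.
    replace (- (x + fold_right Rplus 0 l)) with (- x + - fold_right Rplus 0 l) by ring.
    rewrite exp_plus. apply Rmult_le_compat; try (left; apply exp_pos); auto.
    apply rpow_ge1; auto.
Qed.

Lemma elem_le_sum l a : Forall (fun t => 0 <= t) l -> In a l -> a <= sumL l.
Proof.
  induction 1; simpl; [tauto|]. unfold sumL in *; simpl.
  assert (0 <= fold_right Rplus 0 l).
  { clear - H0. induction H0; simpl; lra. }
  intros [->|Hi]; [lra|]. specialize (IHForall Hi); lra.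
Qed.

Lemma maxL_ge l a : In a l -> a <= maxL l.
Proof.
  induction l; simpl; [tauto|]. intros [->|Hi]; unfold maxL in *; simpl.
  apply Rmax_l. eapply Rle_trans; [apply IHl; auto|apply Rmax_r].
Qed.

Lemma maxL_in l : Forall (fun t => 0 <= t) l -> l <> nil -> In (maxL l) l.
Proof.
  induction 1; [tauto|]. intros _. unfold maxL in *; simpl.
  destruct l as [|b l].
  - simpl. left. symmetry; apply Rmax_left; lra.
  - destruct (Rle_dec x (fold_right Rmax 0 (b :: l))).
    + rewrite Rmax_right; auto. right; apply IHForall; discriminate.
    + rewrite Rmax_left; [left; auto|lra].
Qed.

Lemma sum_bound (psi : R -> R) D y l
  (Hpsi_convex : forall s t l, 0 <= s <= 1 -> 0 <= t <= 1 -> 0 <= l <= 1 ->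
      psi (l * s + (1 - l) * t) <= l * psi s + (1 - l) * psi t)
  (Hpsi0 : psi 0 = 0) (Hy : 0 < y) (HD : 0 < D) (HyD : y / D <= 1) :
  Forall (fun t => 0 <= t <= y) l ->
  sumL (map (fun xj => psi (xj / D)) l) <= psi (y / D) / y * sumL l.
Proof.
  induction 1; unfold sumL in *; simpl; [lra|].
  assert (Hi : 0 < / y) by (apply Rinv_0_lt_compat; auto).
  assert (Hyi : y * / y = 1) by (field; lra).
  assert (Hl : 0 <= x / y <= 1) by (unfold Rdiv; split; nra).
  assert (HyD0 : 0 <= y / D) by (unfold Rdiv; apply Rmult_le_pos; [lra|left; apply Rinv_0_lt_compat; auto]).
  assert (Hc := Hpsi_convex (y / D) 0 (x / y) ltac:(lra) ltac:(lra) Hl).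
  replace (x / y * (y / D) + (1 - x / y) * 0) with (x / D) in Hc by (field; lra).
  rewrite Hpsi0 in Hc.
  replace (psi (y / D) / y * (x + fold_right Rplus 0 l)) with
    (x / y * psi (y / D) + psi (y / D) / y * fold_right Rplus 0 l) by (field; lra).
  lra.
Qed.

Lemma sum_nonpos l c : Forall (fun t => 0 <= t) l -> (forall a, In a l -> a <= c) -> c <= 0 -> sumL l <= 0.
Proof.
  induction 1; intros Hl Hc; unfold sumL in *; simpl; [lra|].
  assert (x <= c) by (apply Hl; simpl; auto).
  assert (fold_right Rplus 0 l <= 0); [|lra].
  apply IHForall; auto. intros; apply Hl; simpl; auto.
Qed.

Theorem lemma5p7 (psi : R -> R) (C : R) (x : list R)
  (Hpsi_range : forall t, 0 <= t <= 1 -> 0 <= psi t <= 1)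
  (Hpsi_convex : forall s t l, 0 <= s <= 1 -> 0 <= t <= 1 -> 0 <= l <= 1 ->
      psi (l * s + (1 - l) * t) <= l * psi s + (1 - l) * psi t)
  (Hpsi_incr : forall s t, 0 <= s -> s <= t -> t <= 1 -> psi s <= psi t)
  (Hpsi0 : psi 0 = 0)
  (HC : exp (/ exp 1) <= C)
  (Hx : stochastic x) :
  let y := maxL x in
  sumL (map (fun xj =>
          psi (xj / (C * prodL (map (fun xk => rpow (1 - xk) (1 - xk)) x)))) x)
  <= / y * psi (y * exp (1 - y) / (C * rpow (1 - y) (1 - y))).
Proof.
  intros y. destruct Hx as [Hnn Hsum].
  assert (Hne : x <> nil) by (intros ->; unfold sumL in Hsum; simpl in Hsum; lra).
  assert (Hin : In y x) by (apply maxL_in; auto).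
  assert (Hle : forall a, In a x -> a <= y) by (intros; apply maxL_ge; auto).
  assert (Hy1 : y <= 1) by (rewrite <- Hsum; apply elem_le_sum; auto).
  assert (Hy0 : 0 < y).
  { destruct (Rlt_le_dec 0 y) as [h|h]; auto. exfalso.
    assert (sumL x <= 0) by (apply (sum_nonpos x y); auto; lra).
    lra. }
  assert (Hb : Forall (fun t => 0 <= t <= 1) x).
  { rewrite Forall_forall in *. intros a Ha. split; auto.
    rewrite <- Hsum; apply elem_le_sum; auto; rewrite Forall_forall; auto. }
  assert (Hby : Forall (fun t => 0 <= t <= y) x).
  { rewrite Forall_forall in *. intros a Ha. split; auto. }
  set (f := fun xk => rpow (1 - xk) (1 - xk)).
  set (P := prodL (map f x)).
  assert (HP : exp (- (1 - y)) * f y <= P).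
  { destruct (in_split _ _ Hin) as [l1 [l2 E]].
    unfold P. rewrite E, map_app, prodL_app. simpl.
    rewrite E, sumL_app in Hsum. rewrite E in Hb.
    apply Forall_app in Hb. destruct Hb as [B1 B2]. apply Forall_inv_tail in B2 as H4.
    assert (H1 := prod_bound l1 B1). assert (H2 := prod_bound l2 H4).
    unfold sumL in Hsum; simpl in Hsum. unfold sumL in H1, H2.
    replace (- (1 - y)) with (- fold_right Rplus 0 l1 + - fold_right Rplus 0 l2) by lra.
    rewrite exp_plus. unfold prodL at 2; simpl.
    fold (prodL (map f l2)).
    assert (0 < f y) by (unfold f; apply rpow_pos; lra).
    assert (0 < exp (- fold_right Rplus 0 l1)) by apply exp_pos.
    assert (0 < exp (- fold_right Rplus 0 l2)) by apply exp_pos.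
    unfold f in *.
    set (r := rpow (1 - y) (1 - y)) in *.
    set (p1 := prodL (map (fun xk : R => rpow (1 - xk) (1 - xk)) l1)) in *.
    set (p2 := prodL (map (fun xk : R => rpow (1 - xk) (1 - xk)) l2)) in *.
    replace (p1 * (r * p2)) with (p1 * p2 * r) by ring.
    apply Rmult_le_compat_r; [lra|]. apply Rmult_le_compat; lra. }
  assert (Hfy : exp (- / exp 1) <= f y) by (apply rpow_ge2; lra).
  assert (Hfy0 : 0 < f y) by (apply rpow_pos; lra).
  assert (HCp : 0 < C) by (eapply Rlt_le_trans; [apply exp_pos|eauto]).
  assert (HCr : 1 <= C * f y).
  { assert (E : exp (/ exp 1) * exp (- / exp 1) = 1) by (rewrite <- exp_plus; replace (/ exp 1 + - / exp 1) with 0 by ring; apply exp_0).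
    assert (0 < exp (/ exp 1)) by apply exp_pos.
    assert (0 < exp (- / exp 1)) by apply exp_pos. nra. }
  assert (Hye : y * exp (1 - y) <= 1).
  { assert (H1 := exp_ineq1_le (y - 1)).
    assert (E : exp (1 - y) * exp (y - 1) = 1) by (rewrite <- exp_plus; replace (1 - y + (y - 1)) with 0 by ring; apply exp_0).
    assert (0 < exp (1 - y)) by apply exp_pos. nra. }
  set (A := y * exp (1 - y) / (C * f y)).
  assert (HA : 0 <= A <= 1).
  { unfold A. assert (0 < exp (1 - y)) by apply exp_pos.
    assert (Hi : 0 < / (C * f y)) by (apply Rinv_0_lt_compat; lra).
    assert (Hi2 : (C * f y) * / (C * f y) = 1) by (field; lra).
    unfold Rdiv. split; [apply Rmult_le_pos; nra|]. nra. }
  set (D := C * P).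
  set (E := C * (exp (- (1 - y)) * f y)).
  assert (HE : 0 < E) by (unfold E; assert (0 < exp (- (1 - y))) by apply exp_pos; nra).
  assert (HED : E <= D) by (unfold E, D; nra).
  assert (HD : 0 < D) by lra.
  assert (HBA : y / D <= A).
  { apply Rle_trans with (y / E).
    - unfold Rdiv. apply Rmult_le_compat_l; [lra|]. apply Rinv_le_contravar; auto.
    - unfold A, E. rewrite exp_Ropp. right.
      assert (exp (1 - y) <> 0) by (apply Rgt_not_eq, exp_pos).
      assert (C <> 0) by lra. assert (f y <> 0) by lra.
      field. repeat split; auto. }
  assert (HB0 : 0 <= y / D) by (unfold Rdiv; apply Rmult_le_pos; [lra|left; apply Rinv_0_lt_compat; auto]).
  assert (Hs := sum_bound psi D y x Hpsi_convex Hpsi0 Hy0 HD ltac:(lra) Hby).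
  fold f. fold P. fold D. fold A.
  rewrite Hsum in Hs.
  assert (Hm := Hpsi_incr (y / D) A HB0 HBA (proj2 HA)).
  assert (Hi : 0 < / y) by (apply Rinv_0_lt_compat; auto).
  change (y * exp (1 - y) / (C * rpow (1 - y) (1 - y))) with A. unfold Rdiv at 2 in Hs. nra.
Qed.
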